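(* Let $A$ be a finite alphabet, let $d: A^n \to A$ be a block map and fix $x_1 \cdots x_{n-1} \in A^{n-1}$. If $d$ is weakly progressive, then the restriction \[\tau_d: Z(x_1 \cdots x_{n-1}) \to \bigcup_{a \in A} Z(d(x_1 \cdots x_{n-1} a))\] is (well defined and) bijective.
   Context: $A$ is a finite set with the discrete topology; $\mathbb{N}=\{1,2,3,\dots\}$; $A^{\mathbb{N}}$ is the space of one-sided infinite sequences over $A$ with the product topology; $A^k$ is the set of words of length $k$. For a word $\mu$, the cylinder set is $Z(\mu)=\{x\in A^{\mathbb{N}} : x_1\cdots x_{|\mu|}=\mu\}$ (for the empty word this is $A^{\mathbb{N}}$). A block map is a function $d: A^n \to A$, and $\tau_d: A^{\mathbb{N}}\to A^{\mathbb{N}}$ is defined by $\tau_d(x)_i = d(x_i \cdots x_{i+n-1})$. For $w=w_1\cdots w_{n-1}\in A^{n-1}$ and $m\in\mathbb{N}$, define $p_{d,m}^{w}: A^m\to A^m$ by letting, for $\beta\in A^m$, the $j$-th letter ($1\le j\le m$) of $p_{d,m}^{w}(\beta)$ be $d$ applied to the subword of length $n$ starting at position $j$ of the concatenated word $w\beta$ (so $p_{d,m}^{w}(a\alpha)=d(w_1\cdots w_{n-1}a)\,d(w_2\cdots w_{n-1}a\alpha_1)\cdots$). The block map $d$ is weakly progressive of order $m$ if for every $\mu \in A^n$ and every $\nu \in A^m$ with $d(\mu)= \nu_1$ there exists a unique $a \in A$ such that the equation $p_{d,m}^{\mu_1 \cdots \mu_{n-1}}(a \alpha)=\nu$ has a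 solution $\alpha \in A^{m-1}$. The block map $d$ is weakly progressive if it is weakly progressive of order $m$ for some $m\in\mathbb{N}$. *)

(* Defs.v *)
From mathcomp Require Import all_boot.
Set Implicit Arguments. Unset Strict Implicit. Unset Printing Implicit Defensive.

(* Conventions: infinite sequences x in A^N are functions nat -> A, with
   the paper's x_1 being x 0 (0-based indexing). Words of length k are
   k.-tuple A. *)

Section Defs.
Variable A : finType.

Definition cyl (k : nat) (mu : k.-tuple A) : (nat -> A) -> Prop :=
  fun x => forall i : 'I_k, x i = tnth mu i.

Definition tau (n : nat) (d : n.-tuple A -> A) (x : nat -> A) : nat -> A :=
  fun i => d [tuple x (i + k) | k < n].

Definition catw (p q : nat) (w : p.-tuple A) (b : q.-tuple A) (i : 'I_(p + q)) : A :=
  match split i with inl j => tnth w j | inr j => tnth b j end.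

Lemma win_lt (n m : nat) (j : 'I_m) (k : 'I_n) : j + k < n.-1 + m.
Proof.
case: j => j /= Hj; case: k => k /= Hk.
have Hk' : k <= n.-1 by case: n Hk.
rewrite addnC -addnS; exact: leq_add.
Qed.

Definition pdm (n m : nat) (d : n.-tuple A -> A) (w : (n.-1).-tuple A)
  (b : m.-tuple A) : m.-tuple A :=
  [tuple d [tuple catw w b (Ordinal (win_lt j k)) | k < n] | j < m].

Definition prefix_word (n : nat) (mu : n.-tuple A) : (n.-1).-tuple A :=
  [tuple tnth mu (widen_ord (leq_pred n) i) | i < n.-1].

(* weakly progressive of order m (m >= 1; order 0 is not allowed since m is
   in N = {1,2,...}) *)
Definition weakly_progressive_of_order (n : nat) (d : n.-tuple A -> A) (m : nat) : Prop :=
  match m with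
  | 0 => False
  | m'.+1 => forall (mu : n.-tuple A) (nu : m'.+1.-tuple A),
      d mu = thead nu ->
      exists! a : A, exists alpha : m'.-tuple A,
        pdm d (prefix_word mu) [tuple of a :: alpha] = nu
  end.

Definition weakly_progressive (n : nat) (d : n.-tuple A -> A) : Prop :=
  exists m, weakly_progressive_of_order d m.

End Defs.

(* Main.v *)
Require Import Defs.
From mathcomp Require Import all_boot zify.
From Stdlib Require Import FunctionalExtensionality.
Set Implicit Arguments. Unset Strict Implicit. Unset Printing Implicit Defensive.

Section H.
Variable A : finType.

Lemma pdm_nth (n m : nat) (d : n.+1.-tuple A -> A) (s : n.-tuple A) (b : m.-tuple A) (x0 : A) (j : 'I_m) :
 tnth (pdm d s b) j = d [tuple nth x0 (s ++ b) (j + i) | i < n.+1].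
Proof.
rewrite /pdm tnth_mktuple; congr d; apply: eq_from_tnth => i; rewrite !tnth_mktuple /catw /=.
case: splitP => [l /= E|l /= E]; rewrite E nth_cat size_tuple.
  by rewrite ltn_ord (tnth_nth x0).
by rewrite ltnNge leq_addr /= addKn (tnth_nth x0).
Qed.

Lemma prefix_rcons (n : nat) (s : n.-tuple A) c :
  prefix_word [tuple of rcons s c] = s.
Proof.
apply: eq_from_tnth => i; rewrite tnth_mktuple !(tnth_nth c) /= nth_rcons size_tuple.
by rewrite ltn_ord.
Qed.

Lemma nth_mk (n : nat) (f : nat -> A) x0 p : p < n -> nth x0 [tuple f i | i < n] p = f p.
Proof. by move=> lt; have := @nth_mktuple _ _ (fun i : 'I_n => f i) x0 (Ordinal lt). Qed.

Lemma nth_win (n m : nat) (z : nat -> A) k x0 p : p < n + m.+1 ->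
  nth x0 ([tuple z (k+i) | i < n] ++ z (k+n) :: [tuple z ((k+n).+1 + j) | j < m]) p = z (k+p).
Proof.
move=> lt; rewrite nth_cat size_tuple.
case: ltnP => h; first by rewrite (nth_mk (fun q => z (k+q))).
case E: (p - n) => [|q] /=.
  by have -> : p = n by apply/eqP; rewrite eqn_leq h -subn_eq0 E.
rewrite (nth_mk (fun q => z ((k+n).+1+q))); last by rewrite -ltnS -E ltn_subLR.
by congr z; lia.
Qed.

Lemma pdm_seq (n m : nat) (d : n.+1.-tuple A -> A) (z : nat -> A) k :
 pdm d [tuple z (k+i) | i < n] [tuple of z (k+n) :: [tuple z ((k+n).+1 + j) | j < m]]
   = [tuple tau d z (k + j) | j < m.+1].
Proof.
apply: eq_from_tnth => j; rewrite (pdm_nth _ _ _ (z 0)) tnth_mktuple /tau; congr d.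
apply: eq_from_tnth => i; rewrite !tnth_mktuple nth_win ?addnA //.
have := ltn_ord j; have := ltn_ord i; rewrite /=; lia.
Qed.

Lemma nth_cat_rcons (B : seq A) h t x0 i : i <= size B ->
  nth x0 (B ++ h :: t) i = nth x0 (rcons B h) i.
Proof.
move=> hi; rewrite -cats1 !nth_cat; case: ltnP => // h2.
by have -> : i - size B = 0 by apply/eqP; rewrite subn_eq0.
Qed.

Lemma tuple_rcons (n : nat) (s : n.-tuple A) (z : nat -> A) k x0 :
  (forall p, p < n -> nth x0 s p = z (k+p)) ->
  [tuple z (k+i) | i < n.+1] = [tuple of rcons s (z (k+n))].
Proof.
move=> hs; apply: eq_from_tnth => i; rewrite tnth_mktuple (tnth_nth x0) /= nth_rcons size_tuple.
case: ltnP => h; first by rewrite hs.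
have -> : nat_of_ord i = n by apply/eqP; rewrite eqn_leq h -ltnS ltn_ord.
by rewrite eqxx.
Qed.
End H.

Section Build.
Variables (A : finType) (n : nat) (d : n.+1.-tuple A -> A) (y : nat -> A) (w : n.-tuple A).
Definition shift (s : n.-tuple A) a : n.-tuple A := [tuple of behead (rcons s a)].
Definition good (k : nat) (s : n.-tuple A) (a : A) : bool := (d [tuple of rcons s a] == y k) &&
   [exists c, d [tuple of rcons (shift s a) c] == y k.+1].
Definition next (k : nat) (s : n.-tuple A) : A := odflt (y 0) [pick a | good k s a].
Fixpoint state k := if k is k'.+1 then shift (state k') (next k' (state k')) else w.
Definition xs i := nth (y 0) (rcons (state i) (next i (state i))) 0.

Lemma xs_nth j : forall k, j <= n -> xs (k+j) = nth (y 0) (rcons (state k) (next k (state k))) j.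
Proof.
elim: j => [|j IH] k hj; first by rewrite addn0.
rewrite addnS -addSn IH; last by apply: ltnW.
rewrite /= nth_rcons size_tuple hj /shift /=.
by rewrite -nth_behead.
Qed.

Hypothesis key : forall (s : n.-tuple A) (k : nat) (c : A), d [tuple of rcons s c] = y k -> exists a, good k s a.
Hypothesis I0 : exists c, d [tuple of rcons w c] = y 0.

Lemma next_good k : (exists c, d [tuple of rcons (state k) c] = y k) ->
  good k (state k) (next k (state k)).
Proof.
case=> c hc; have [a ha] := key hc.
rewrite /next; case: pickP => [b hb //|h]; by rewrite h in ha.
Qed.

Lemma inv k : exists c, d [tuple of rcons (state k) c] = y k.
Proof.
elim: k => [//|k IH]; have /andP [_ /existsP [c /eqP hc]] := next_good IH.
by exists c.
Qed.

Lemma xs_tau : tau d xs = y.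
Proof.
apply: functional_extensionality => k; rewrite /tau.
have /andP [/eqP <- _] := next_good (inv k); congr d.
apply: eq_from_tnth => i; rewrite tnth_mktuple (tnth_nth (y 0)) xs_nth //.
by rewrite -ltnS ltn_ord.
Qed.

Lemma xs_cyl : cyl w xs.
Proof.
move=> i; rewrite -(add0n i) xs_nth; last by apply: ltnW.
by rewrite /= nth_rcons size_tuple ltn_ord (tnth_nth (y 0)).
Qed.
End Build.

Section Main.
Variables (A : finType) (n : nat) (d : n.+1.-tuple A -> A).

Lemma pdm_first m (s : n.-tuple A) a (alpha : m.-tuple A) :
  tnth (pdm d s [tuple of a :: alpha]) ord0 = d [tuple of rcons s a].
Proof.
rewrite (pdm_nth _ _ _ a); congr d; apply: eq_from_tnth => i.
rewrite tnth_mktuple (tnth_nth a) /= nth_cat_rcons // size_tuple -ltnS ltn_ord; by [].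
Qed.

Lemma surj0 : weakly_progressive_of_order d 1 ->
  forall (s : n.-tuple A) v, exists c, d [tuple of rcons s c] = v.
Proof.
move=> H s v.
have inj : injective (fun a => d [tuple of rcons s a]).
  move=> a b hab.
  have [a0 [_ hu]] := H [tuple of rcons s a] [tuple d [tuple of rcons s a]] erefl.
  have P : forall c, d [tuple of rcons s c] = d [tuple of rcons s a] ->
      exists alpha : 0.-tuple A, pdm d (prefix_word [tuple of rcons s a]) [tuple of c :: alpha]
        = [tuple d [tuple of rcons s a]].
    move=> c hc; exists [tuple]; rewrite prefix_rcons; apply: eq_from_tnth => j.
    rewrite (ord1 j) pdm_first hc; by [].
  by rewrite -(hu a (P a erefl)) (hu b (P b (esym hab))).
have [g fg gf] := injF_bij inj.
by exists (g v); rewrite gf.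
Qed.

Lemma keyL (m : nat) (y : nat -> A) : weakly_progressive_of_order d m ->
  forall (s : n.-tuple A) (k : nat) (c : A), d [tuple of rcons s c] = y k ->
  exists a, good d y k s a.
Proof.
case: m => [//|m] H s k c hc.
have E : d [tuple of rcons s c] = thead [tuple y (k + j) | j < m.+1].
  by rewrite /thead tnth_mktuple addn0.
have [a [[alpha ha] _]] := H _ _ E.
rewrite prefix_rcons in ha.
exists a; apply/andP; split.
  by apply/eqP; have := f_equal (fun t => tnth t ord0) ha; rewrite pdm_first tnth_mktuple addn0.
apply/existsP; clear E; case: m H alpha ha => [|m] H alpha ha.
  have [c' hc'] := surj0 H (shift s a) (y k.+1); by exists c'; apply/eqP.
exists (thead alpha); apply/eqP.
have := f_equal (fun t => tnth t (lift ord0 ord0)) ha.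
rewrite (pdm_nth _ _ _ a) tnth_mktuple /= addn1 => <-; congr d.
apply: eq_from_tnth => i; rewrite !tnth_mktuple !(tnth_nth a) /=.
rewrite -cat_rcons /shift /=.
have hs : size (rcons s a) = n.+1 by rewrite size_rcons size_tuple.
case: (rcons s a) hs => [|x l] //= [hs].
have -> : tval alpha = thead alpha :: behead alpha by case: alpha {ha} => -[|h t].
rewrite add0n nth_cat_rcons // hs -ltnS ltn_ord; by [].
Qed.
End Main.

Lemma cyl_nth (A : finType) (n : nat) (w : n.-tuple A) x x0 :
  cyl w x -> forall p, p < n -> nth x0 w p = x (0 + p).
Proof. by move=> hx p hp; rewrite add0n (hx (Ordinal hp)) (tnth_nth x0). Qed.

Theorem proposition3p10 (A : finType) (n : nat) (d : n.+1.-tuple A -> A)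
  (w : n.-tuple A) :
  weakly_progressive d ->
  let U := fun y : nat -> A =>
    exists a : A, cyl [tuple d [tuple of rcons w a]] y in
  (forall x, cyl w x -> U (tau d x)) /\
  (forall x y, cyl w x -> cyl w y -> tau d x = tau d y -> x = y) /\
  (forall y, U y -> exists x, cyl w x /\ tau d x = y).
Proof.
case=> m H U; split; [|split].
- move=> x hx; exists (x (0 + n)) => i; rewrite (ord1 i) /= /tau.
  by congr d; rewrite (@tuple_rcons _ n w x 0 (x 0) (@cyl_nth _ _ w x (x 0) hx)).
- move=> x y hx hy hxy.
  suff S : forall k i, i < n + k -> x i = y i.
    by apply: functional_extensionality => i; apply: (S i.+1); rewrite addnS ltnS leq_addl.
  elim=> [|k IH] i hi.
    by rewrite addn0 in hi; rewrite (hx (Ordinal hi)) (hy (Ordinal hi)).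
  case: (ltnP i (n + k)) => hik; first exact: IH.
  have -> : i = k + n by apply/eqP; rewrite eqn_leq addnC hik -ltnS -addnS hi.
  case: m H => [//|m] H.
  have E : d [tuple x (k+i) | i < n.+1] = thead [tuple tau d x (k + j) | j < m.+1].
    by rewrite /thead tnth_mktuple addn0.
  have [a [_ hu]] := H _ _ E.
  have pw : prefix_word [tuple x (k+i) | i < n.+1] = [tuple x (k+i) | i < n].
    rewrite (@tuple_rcons _ n [tuple x (k+i) | i < n] x k (x 0)) ?prefix_rcons //.
    by move=> p hp; rewrite (nth_mk (fun q => x (k+q))).
  have pw' : [tuple x (k+i) | i < n] = [tuple y (k+i) | i < n].
    by apply: eq_mktuple => j; apply: IH; have := ltn_ord j; lia.
  rewrite -(hu (x (k + n))); last first.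
    by exists [tuple x ((k+n).+1 + j) | j < m]; rewrite pw pdm_seq.
  apply: hu; exists [tuple y ((k+n).+1 + j) | j < m]; rewrite pw pw' pdm_seq -hxy //.
- move=> y [a0 ha0].
  have I0 : exists c, d [tuple of rcons w c] = y 0.
    by exists a0; rewrite (ha0 ord0).
  exists (xs d y w); split; first exact: xs_cyl.
  apply: xs_tau => //; exact: keyL H.
Qed.
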